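(* In the big-action setting below, assume $n\ge2$ and that for all $i$ and all $y\in V$, $f_i(X+y)-f_i(X)\in\wp(k[X])$, so that $f_i(X)\equiv XS_i(X)+c_iX\bmod\wp(k[X])$ with $c_i\in k$ and $S_i(X)=\sum_{j=0}^{s_i}a_{i,j}X^{p^j}$ additive, $s_i\ge1$, $a_{i,s_i}\ne0$. Assume moreover $v=2s_n$. Then $s_1=\dots=s_n=:s$ and $V=Z(\mathrm{Ad}_{f_1})$. Furthermore there exist a divisor $d$ of $s$ and elements $\gamma_2,\dots,\gamma_n\in\mathbb F_{p^d}\setminus\mathbb F_p$ such that, writing $S_1(X)=\sum_{j=0}^sa_jX^{p^j}$, one has $a_j=0$ whenever $d\nmid j$ (i.e. $S_1=\sum_{j=0}^{s/d}a_{jd}X^{p^{jd}}$), and $S_i=\gamma_iS_1$ for all $i\in\{2,\dots,n\}$; moreover $1,\gamma_2,\dots,\gamma_n$ are linearly independent over $\mathbb F_p$. In particular $s\ge2$.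
   Context: Big-action setting. Let $k$ be an algebraically closed field of characteristic $p>0$, $C$ a connected nonsingular projective curve over $k$ of genus $g\ge 2$, and $G$ a finite $p$-subgroup of $\mathrm{Aut}_k(C)$ with $|G|/g>2p/(p-1)$ (a ''big action'' $(C,G)$). It is known that there is a point $\infty\in C$ such that $G$ equals its own first (wild) ramification group at $\infty$, that $\infty$ is the only ramification point of $C\to C/G\cong\mathbb P^1_k$, that the second lower ramification group $G_2$ of $G$ at $\infty$ is a nontrivial proper subgroup of $G$ equal to the commutator subgroup $D(G)$, and that $C/G_2\cong\mathbb P^1_k$. Assume $G_2\cong(\mathbb Z/p\mathbb Z)^n$ with $n\ge1$. Put $L=k(C)$ and write $L^{G_2}=k(X)$, where $X$ is a coordinate on $C/G_2$ with pole at the image of $\infty$; then $G/G_2$ acts on $k(X)$ by translations $X\mapsto X+y$, $y$ ranging over an $\mathbb F_p$-subspace $V\subset k$ of dimension $v$, giving an exact sequence $0\to G_2\to G\to V\to 0$, $\sigma\mapsto\sigma(X)-X$. Let $\wp(Z)=Z^p-Z$. A polynomial in $k[X]$ is called reduced if it is a $k$-linear combination of monomials $X^j$ with $p\nmid j$; every $f\in k[X]$ is congruent modulo $\wp(k[X])$ to a unique reduced polynomial. Let $A=(\wp(L)\cap k[X])/\wp(k[X])$, an $n$-dimensional $\mathbb F_p$-vector space, and for $\bar f\in A$ let $\deg\bar f=\min\{\deg(f+\wp(P)):P\in k[X]\}$. Fix an $\mathbb F_p$-basis $\bar f_1,\dots,\bar f_n$ of $A$ with $m_i:=\deg\bar f_i$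 such that (a) $p\nmid m_i$, (b) $m_1\le\dots\le m_n$, (c) for all $(\lambda_1,\dots,\lambda_n)\in\mathbb F_p^n\setminus\{0\}$, $\deg(\sum_i\lambda_i\bar f_i)=\max_i\deg(\lambda_i\bar f_i)$. Let $f_i\in k[X]$ be the reduced representative of $\bar f_i$ (so $\deg f_i=m_i$); then $L=k(X,W_1,\dots,W_n)$ with $W_i^p-W_i=f_i(X)$. Palindromic polynomial: for $f(X)=XS(X)+cX$ with $S(X)=\sum_{j=0}^{s}a_jX^{p^j}$, $s\ge1$, $a_s\ne0$, define the additive polynomial $\mathrm{Ad}_f(X)=\frac1{a_s}\sum_{j=0}^{s}(a_j^{p^s}X^{p^{s+j}}+a_j^{p^{s-j}}X^{p^{s-j}})$, and let $Z(\mathrm{Ad}_f)\subset k$ be its set of roots. $\mathbb F_{p^d}$ denotes the subfield of $k$ with $p^d$ elements. *)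

(* Defs.v *)
From HB Require Import structures.
From mathcomp Require Import all_boot all_order all_algebra.
Set Implicit Arguments. Unset Strict Implicit. Unset Printing Implicit Defensive.
Import Order.TTheory GRing.Theory.
Local Open Scope ring_scope.

Section BigAction.
Variable k : fieldType.

Definition wp (p : nat) (P : {poly k}) : {poly k} := P ^+ p - P.

Definition in_wp (p : nat) (Q : {poly k}) : Prop := exists P : {poly k}, Q = wp p P.

Definition reduced (p : nat) (f : {poly k}) : Prop :=
  forall j : nat, (p %| j)%N -> f`_j = 0.

(* m is the degree of the class of f in k[X]/wp(k[X]):
   m = min { deg (f + wp P) : P in k[X] } *)
Definition is_clsdeg (p : nat) (f : {poly k}) (m : nat) : Prop :=
  (exists P : {poly k}, predn (size (f + wp p P)) = m) /\
  (forall P : {poly k}, leq m (predn (size (f + wp p P)))).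

Definition addS (p s : nat) (a : nat -> k) : {poly k} :=
  \sum_(j < s.+1) a j *: 'X^(p ^ j).

(* Ad_f for f = X S(X) + c X, S = addS p s a *)
Definition Ad (p s : nat) (a : nat -> k) : {poly k} :=
  (a s)^-1 *: \sum_(j < s.+1)
     ((a j) ^+ (p ^ s) *: 'X^(p ^ (s + j)) + (a j) ^+ (p ^ (s - j)) *: 'X^(p ^ (s - j))).

Definition inFq (p d : nat) (x : k) : bool := x ^+ (p ^ d) == x.

End BigAction.

(* Main.v *)
Require Import Defs.
From HB Require Import structures.
From mathcomp Require Import all_boot all_order all_algebra.
Import Order.TTheory GRing.Theory.
Local Open Scope ring_scope.

Set Implicit Arguments. Unset Strict Implicit.


Lemma pnat_pe (R : nzRingType) (p e : nat) : p \in [pchar R] -> [pchar R].-nat (p ^ e)%N.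
Proof.
move=> hp; rewrite (eq_pnat _ (pcharf_eq hp)) pnatX pnat_id //.
exact: pcharf_prime hp.
Qed.

Lemma frobD (R : comNzRingType) (p e : nat) (x y : R) : p \in [pchar R] ->
  (x + y) ^+ (p ^ e) = x ^+ (p ^ e) + y ^+ (p ^ e).
Proof. by move=> hp; apply: exprDn_pchar; apply: pnat_pe. Qed.

Lemma frobN (R : comNzRingType) (p e : nat) (x : R) : p \in [pchar R] ->
  (- x) ^+ (p ^ e) = - x ^+ (p ^ e).
Proof. by move=> hp; apply: exprNn_pchar; apply: pnat_pe. Qed.

Lemma frobB (R : comNzRingType) (p e : nat) (x y : R) : p \in [pchar R] ->
  (x - y) ^+ (p ^ e) = x ^+ (p ^ e) - y ^+ (p ^ e).
Proof. by move=> hp; rewrite frobD // frobN. Qed.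

Lemma frob_sum (R : comNzRingType) (p e : nat) (I : Type) (r : seq I) (P : pred I) (F : I -> R) :
  p \in [pchar R] ->
  (\sum_(i <- r | P i) F i) ^+ (p ^ e) = \sum_(i <- r | P i) F i ^+ (p ^ e).
Proof.
move=> hp; elim/big_rec2: _ => [|i y1 y2 _ <-]; first by rewrite expr0n expn_eq0 eqn0Ngt (prime_gt0 (pcharf_prime hp)).
by rewrite frobD.
Qed.

Lemma frob_inj (F : fieldType) (p e : nat) (x y : F) : p \in [pchar F] ->
  x ^+ (p ^ e) = y ^+ (p ^ e) -> x = y.
Proof.
move=> hp h; apply/eqP; rewrite -subr_eq0.
have : (x - y) ^+ (p ^ e) == 0 by rewrite frobB // h subrr.
by rewrite expf_eq0 => /andP[].
Qed.

Lemma pgt1 (R : nzRingType) (p : nat) : p \in [pchar R] -> (1 < p)%N.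
Proof. by move=> hp; apply: prime_gt1; apply: pcharf_prime hp. Qed.


Definition Lf (k : fieldType) (p N : nat) (Q : {poly k}) : k :=
  \sum_(e < N.+1) Q`_(p ^ e) ^+ (p ^ (N - e)).

Lemma LfD (k : fieldType) p N (Q1 Q2 : {poly k}) : p \in [pchar k] ->
  Lf p N (Q1 + Q2) = Lf p N Q1 + Lf p N Q2.
Proof.
move=> hp; rewrite /Lf -big_split /=; apply: eq_bigr => e _.
by rewrite coefD frobD.
Qed.

Lemma LfN (k : fieldType) p N (Q : {poly k}) : p \in [pchar k] ->
  Lf p N (- Q) = - Lf p N Q.
Proof.
move=> hp; rewrite /Lf -sumrN; apply: eq_bigr => e _.
by rewrite coefN frobN.
Qed.

Lemma LfB (k : fieldType) p N (Q1 Q2 : {poly k}) : p \in [pchar k] ->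
  Lf p N (Q1 - Q2) = Lf p N Q1 - Lf p N Q2.
Proof. by move=> hp; rewrite LfD // LfN. Qed.

Lemma Lf_sum (k : fieldType) p N (I : Type) (r : seq I) (P : pred I) (F : I -> {poly k}) :
  p \in [pchar k] ->
  Lf p N (\sum_(i <- r | P i) F i) = \sum_(i <- r | P i) Lf p N (F i).
Proof.
move=> hp; elim/big_rec2: _ => [|i y1 y2 _ <-].
  by rewrite /Lf big1 // => e _; rewrite coef0 expr0n expn_eq0 eqn0Ngt (prime_gt0 (pcharf_prime hp)).
by rewrite LfD.
Qed.

Lemma Lf_C (k : fieldType) p N (c : k) : p \in [pchar k] -> Lf p N c%:P = 0.
Proof.
move=> hp; rewrite /Lf big1 // => e _; rewrite coefC expn_eq0 eqn0Ngt (prime_gt0 (pcharf_prime hp)) /=.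
by rewrite expr0n expn_eq0 eqn0Ngt (prime_gt0 (pcharf_prime hp)).
Qed.

Lemma Lf_monoE (k : fieldType) p N (c : k) m : p \in [pchar k] ->
  Lf p N (c *: 'X^m) = \sum_(e < N.+1) (c * (m == p ^ e)%N%:R) ^+ (p ^ (N - e)).
Proof. by move=> hp; apply: eq_bigr => e _; rewrite coefZ coefXn eq_sym. Qed.

Lemma sum_ind (k : fieldType) (G : nat -> k) s j0 :
  \sum_(j < s.+1) G j * (j == j0 :> nat)%:R = if (j0 <= s)%N then G j0 else 0.
Proof.
case: ifP => hj.
  rewrite (bigD1 (Ordinal (hj : (j0 < s.+1)%N))) //= eqxx mulr1 big1 ?addr0 // => j hj1.
  have -> : (j == j0 :> nat) = false by apply/negbTE; apply: contra hj1 => /eqP h; apply/eqP/val_inj.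
  by rewrite mulr0.
rewrite big1 // => j _; have -> : (j == j0 :> nat) = false.
  by apply/negbTE; apply: contraFN hj => /eqP <-; rewrite -ltnS.
by rewrite mulr0.
Qed.

Lemma Lf_mono (k : fieldType) p N (c : k) j : p \in [pchar k] -> (j <= N)%N ->
  Lf p N (c *: 'X^(p ^ j)) = c ^+ (p ^ (N - j)).
Proof.
move=> hp hj; rewrite Lf_monoE //.
have p1 := pgt1 hp.
rewrite (eq_bigr (fun e : 'I_N.+1 => (c ^+ (p ^ (N - e))) * (e == j :> nat)%:R)).
  by rewrite (sum_ind (fun e => c ^+ (p ^ (N - e)))) hj.
move=> e _; rewrite eqn_exp2l // eq_sym; case: eqP => _; first by rewrite !mulr1.
by rewrite !mulr0 expr0n expn_eq0 eqn0Ngt ltnW.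
Qed.

Lemma Lf_wp_mono (k : fieldType) p N (c : k) m : p \in [pchar k] -> (m < p ^ N)%N ->
  Lf p N ((c *: 'X^m) ^+ p) = Lf p N (c *: 'X^m).
Proof.
move=> hp hm; have p1 := pgt1 hp; have p0 : (0 < p)%N by apply: ltnW.
rewrite exprZn -exprM !Lf_monoE // big_ord_recl big_ord_recr /=.
have -> : (m * p == p ^ 0)%N = false.
  by rewrite expn0; apply/negbTE; rewrite muln_eq1; apply/negP => /andP[_ /eqP h]; rewrite h in p1.
have -> : (m == p ^ N)%N = false by apply/negbTE; rewrite neq_ltn hm.
rewrite !mulr0 !expr0n !expn_eq0 !eqn0Ngt p0 /= !mulr0n add0r addr0.
apply: eq_bigr => e _; rewrite /bump /= add1n.
rewrite expnSr eqn_pmul2r //; case: eqP => _; last first.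
  by rewrite !mulr0 !expr0n !expn_eq0 !eqn0Ngt p0.
rewrite !mulr1 -exprM -expnS subnS prednK //.
by rewrite subn_gt0 (ltn_ord e).
Qed.

Lemma Lf_wp (k : fieldType) p N (P : {poly k}) : p \in [pchar k] -> (size P <= p ^ N)%N ->
  Lf p N (wp p P) = 0.
Proof.
move=> hp hs; have hpp : p \in [pchar {poly k}] by rewrite pchar_poly.
have e1 : forall Q : {poly k}, Q ^+ p = Q ^+ (p ^ 1)%N by move=> Q; rewrite expn1.
rewrite /wp -{1 2}(coefK P) poly_def e1 frob_sum // LfB // !Lf_sum //.
rewrite -sumrB big1 // => i _.
rewrite expn1 Lf_wp_mono ?subrr //.
exact: leq_trans (ltn_ord i) hs.
Qed.


Lemma comp_Xn (k : fieldType) (n : nat) (q : {poly k}) : 'X^n \Po q = q ^+ n.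
Proof.
elim: n => [|n IH]; first by rewrite !expr0 comp_polyC.
by rewrite !exprS comp_polyM comp_polyX IH.
Qed.

Lemma addS_comp (k : fieldType) p s (a : nat -> k) (y : k) : p \in [pchar k] ->
  addS p s a \Po ('X + y%:P) = addS p s a + (addS p s a).[y]%:P.
Proof.
move=> hp; have hpp : p \in [pchar {poly k}] by rewrite pchar_poly.
rewrite /addS horner_sum.
elim: s.+1 => [|t IH]; first by rewrite !big_ord0 comp_poly0 add0r.
rewrite !big_ord_recr /= comp_polyD IH comp_polyZ comp_Xn frobD // hornerZ hornerXn -polyC_exp.
by rewrite polyCD polyCM -mul_polyC addrACA mulrDr mul_polyC mul_polyC.
Qed.

Lemma cancel6 (R : zmodType) (A B C D E F : R) :
  ((A + B) + (C + D)) + (E + F) - (A + E) = B + C + D + F.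
Proof.
rewrite [A + E]addrC opprD addrA -[_ + (E + F) - E]addrA [(E + F) - E]addrC addKr.
have -> : A + B + (C + D) + F = A + (B + C + D + F) by rewrite !addrA.
by rewrite addrC addKr.
Qed.

Lemma Lf_yS (k : fieldType) p s N (a : nat -> k) (y : k) : p \in [pchar k] -> (s <= N)%N ->
  Lf p N (y *: addS p s a) = \sum_(j < s.+1) (y * a j) ^+ (p ^ (N - j)).
Proof.
move=> hp hs; rewrite /addS scaler_sumr Lf_sum //; apply: eq_bigr => j _.
rewrite scalerA Lf_mono //; by apply: leq_trans hs; rewrite -ltnS.
Qed.

Lemma LfQ (k : fieldType) p s N (a : nat -> k) (c y : k) : p \in [pchar k] -> (s <= N)%N ->
  let f := 'X * addS p s a + c *: 'X in
  Lf p N (f \Po ('X + y%:P) - f) =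
  (addS p s a).[y] ^+ (p ^ N) + \sum_(j < s.+1) (y * a j) ^+ (p ^ (N - j)).
Proof.
move=> hp hs f; rewrite /f comp_polyD comp_polyM comp_polyZ !comp_polyX addS_comp //.
rewrite mulrDl !mulrDr scalerDr cancel6 !LfD //.
rewrite mulrC mul_polyC mul_polyC.
rewrite -polyCM scale_polyC !Lf_C // !addr0.
have -> : 'X = 'X^(p ^ 0) :> {poly k} by rewrite expn0 expr1.
rewrite -{1}(scale1r 'X^(p ^ 0)) scalerA mulr1 Lf_mono // subn0 Lf_yS //.
Qed.

Lemma addS_horner (k : fieldType) p s (a : nat -> k) (y : k) :
  (addS p s a).[y] = \sum_(j < s.+1) a j * y ^+ (p ^ j).
Proof. by rewrite /addS horner_sum; apply: eq_bigr => j _; rewrite hornerZ hornerXn. Qed.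

Lemma Ad_hornerE (k : fieldType) p s N (a : nat -> k) (y : k) : p \in [pchar k] -> (s <= N)%N -> a s != 0 ->
  (a s * (Ad p s a).[y]) ^+ (p ^ (N - s)) =
  (addS p s a).[y] ^+ (p ^ N) + \sum_(j < s.+1) (y * a j) ^+ (p ^ (N - j)).
Proof.
move=> hp hs has; rewrite /Ad hornerZ mulVKf // horner_sum frob_sum // addS_horner frob_sum //.
rewrite -big_split /=; apply: eq_bigr => j _.
have hj : (j <= s)%N by rewrite -ltnS.
rewrite hornerD !hornerZ !hornerXn frobD // !exprMn -!exprM -!expnD subnKC //.
congr (_ * _ + _).
  by rewrite addnAC subnKC // addnC.
by rewrite mulrC addnC addnBA // subnK.
Qed.

Lemma trans_root (k : fieldType) p s (a : nat -> k) (c y : k) : p \in [pchar k] -> a s != 0 ->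
  in_wp p (('X * addS p s a + c *: 'X) \Po ('X + y%:P) - ('X * addS p s a + c *: 'X)) ->
  root (Ad p s a) y.
Proof.
move=> hp has [P hP]; set N := (s + size P)%N.
have hsN : (s <= N)%N by rewrite leq_addr.
have hPN : (size P <= p ^ N)%N.
  apply: leq_trans (ltnW (ltn_expl _ (pgt1 hp))) _; rewrite leq_exp2l ?leq_addl //; exact: pgt1 hp.
have := LfQ a c y hp hsN; rewrite /= hP Lf_wp // -(Ad_hornerE y hp hsN has) => /esym/eqP.
rewrite expf_eq0 mulf_eq0 (negbTE has) /= => /andP[_ /eqP h]; exact/eqP.
Qed.


Lemma Ad_coef (k : fieldType) p s (a : nat -> k) m :
  (Ad p s a)`_m = (a s)^-1 * \sum_(j < s.+1)
     (a j ^+ (p ^ s) * (m == p ^ (s + j))%N%:R + a j ^+ (p ^ (s - j)) * (m == p ^ (s - j))%N%:R).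
Proof.
rewrite /Ad coefZ coef_sum; congr (_ * _); apply: eq_bigr => j _.
by rewrite coefD !coefZ !coefXn.
Qed.

Lemma sum_ind1 (k : fieldType) (G : nat -> k) s t :
  \sum_(j < s.+1) G j * (t == s + j)%N%:R = if (s <= t <= s + s)%N then G (t - s)%N else 0.
Proof.
case: (leqP s t) => hst /=.
  rewrite -[in LHS](subnKC hst).
  rewrite (eq_bigr (fun j : 'I_s.+1 => G j * (j == (t - s)%N :> nat)%:R)); last first.
    by move=> j _; rewrite eqn_add2l eq_sym.
  by rewrite sum_ind leq_subLR.
rewrite big1 // => j _.
have -> : (t == s + j)%N = false by apply/negbTE; rewrite neq_ltn (leq_trans hst) ?leq_addr.
by rewrite mulr0.
Qed.

Lemma sum_ind2 (k : fieldType) (G : nat -> k) s t :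
  \sum_(j < s.+1) G j * (t == s - j)%N%:R = if (t <= s)%N then G (s - t)%N else 0.
Proof.
case: (leqP t s) => hst /=.
  rewrite (eq_bigr (fun j : 'I_s.+1 => G j * (j == (s - t)%N :> nat)%:R)); last first.
    move=> j _; have hj : (j <= s)%N by rewrite -ltnS.
    have -> : (t == s - j)%N = (nat_of_ord j == s - t)%N.
      by apply/eqP/eqP => [->|->]; rewrite subKn.
    by [].
  by rewrite sum_ind leq_subr.
rewrite big1 // => j _.
have -> : (t == s - j)%N = false by apply/negbTE; rewrite neq_ltn (leq_ltn_trans (leq_subr _ _) hst) orbT.
by rewrite mulr0.
Qed.

Lemma Ad_coef_pow (k : fieldType) p s (a : nat -> k) t : p \in [pchar k] ->
  (Ad p s a)`_(p ^ t) = (a s)^-1 *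
    ((if (s <= t <= s + s)%N then a (t - s)%N ^+ (p ^ s) else 0) +
     (if (t <= s)%N then a (s - t)%N ^+ (p ^ t) else 0)).
Proof.
move=> hp; have p1 := pgt1 hp.
rewrite Ad_coef big_split /=; congr (_ * (_ + _)).
  rewrite -(sum_ind1 (fun j => a j ^+ (p ^ s))); apply: eq_bigr => j _.
  by rewrite eqn_exp2l.
rewrite (eq_bigr (fun j : 'I_s.+1 => a j ^+ (p ^ (s - j)) * (t == s - j)%N%:R)); last first.
  by move=> j _; rewrite eqn_exp2l.
rewrite (sum_ind2 (fun j => a j ^+ (p ^ (s - j)))).
by case: (leqP t s) => // hts; rewrite subKn.
Qed.

Section AdFacts.
Variables (k : fieldType) (p s : nat) (a : nat -> k).
Hypotheses (hp : p \in [pchar k]) (hs : (1 <= s)%N) (has : a s != 0).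

Lemma Ad_coef1 : (Ad p s a)`_1 = 1.
Proof.
have -> : 1%N = (p ^ 0)%N by [].
rewrite Ad_coef_pow //= leqn0 eqn0Ngt hs /= subn0 expn0 expr1 add0r mulVf //.
Qed.

Lemma Ad_coef_hi j : (1 <= j <= s)%N ->
  (Ad p s a)`_(p ^ (s + j)) = (a s)^-1 * a j ^+ (p ^ s).
Proof.
case/andP => hj1 hjs.
rewrite Ad_coef_pow // leq_addr leq_add2l hjs /= addKn.
have -> : (s + j <= s)%N = false by apply/negbTE; rewrite -ltnNge -{1}(addn0 s) ltn_add2l.
by rewrite addr0.
Qed.

Lemma Ad_coef_mid : (Ad p s a)`_(p ^ s) = (a s)^-1 * (a 0%N ^+ (p ^ s) + a 0%N ^+ (p ^ s)).
Proof. by rewrite Ad_coef_pow // leqnn leq_addr subnn. Qed.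

Lemma Ad_coef_lo j : (1 <= j <= s)%N ->
  (Ad p s a)`_(p ^ (s - j)) = (a s)^-1 * a j ^+ (p ^ (s - j)).
Proof.
case/andP => hj1 hjs.
rewrite Ad_coef_pow // leq_subr subKn //.
have -> : (s <= s - j)%N = false.
  by apply/negbTE; rewrite -ltnNge ltn_subrL hj1 (leq_trans hj1 hjs).
by rewrite add0r.
Qed.

Lemma Ad_lead : (Ad p s a)`_(p ^ (s + s)) != 0.
Proof.
rewrite Ad_coef_hi ?hs ?leqnn // mulf_eq0 invr_eq0 negb_or has /= expf_eq0 negb_and has orbT //.
Qed.

Lemma Ad_size : size (Ad p s a) = (p ^ (s + s)).+1.
Proof.
have p1 := pgt1 hp.
apply/eqP; rewrite eqn_leq; apply/andP; split; last first.
  by rewrite ltnNge; apply: contra Ad_lead => h; rewrite nth_default.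
apply/leq_sizeP => m hm; rewrite Ad_coef big1 ?mulr0 // => j _.
have hj : (j <= s)%N by rewrite -ltnS.
have -> : (m == p ^ (s + j))%N = false.
  apply/negbTE; rewrite neq_ltn; apply/orP; right; apply: leq_trans hm.
  by rewrite ltnS leq_exp2l // leq_add2l.
have -> : (m == p ^ (s - j))%N = false.
  apply/negbTE; rewrite neq_ltn; apply/orP; right; apply: leq_trans hm.
  by rewrite ltnS leq_exp2l // (leq_trans (leq_subr _ _) (leq_addr _ _)).
by rewrite !mulr0 addr0.
Qed.

Lemma Ad_neq0 : Ad p s a != 0.
Proof. by rewrite -size_poly_eq0 Ad_size. Qed.

End AdFacts.


Lemma poly_eq_prod (k : fieldType) (q : {poly k}) (rs : seq k) :
  q != 0 -> all (root q) rs -> uniq rs -> size q = (size rs).+1 ->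
  q = lead_coef q *: \prod_(z <- rs) ('X - z%:P).
Proof.
move=> q0 hr hu hs.
have [r hq] : exists r, q = r * \prod_(z <- rs) ('X - z%:P).
  by apply: uniq_roots_prod_XsubC hr _; rewrite uniq_rootsE.
have r0 : r != 0 by apply: contra q0; rewrite hq => /eqP ->; rewrite mul0r.
have pr0 : \prod_(z <- rs) ('X - z%:P) != 0 by rewrite monic_neq0 // monic_prod_XsubC.
have hsr : size r = 1%N.
  move: hs; rewrite hq size_mul // size_prod_XsubC addnS /= => /eqP.
  by rewrite -add1n eqn_add2r => /eqP.
rewrite hq; have -> : r = (r`_0)%:P by apply: size1_polyC; rewrite hsr.
by rewrite lead_coefM lead_coefC (monicP (monic_prod_XsubC _ _ _)) mulr1 mul_polyC.
Qed.

Lemma coefS (k : fieldType) p s (a : nat -> k) j :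
  (addS p s a)`_j = \sum_(t < s.+1) a t * (j == p ^ t)%N%:R.
Proof. by rewrite /addS coef_sum; apply: eq_bigr => t _; rewrite coefZ coefXn. Qed.

Lemma coefS_pow (k : fieldType) p s (a : nat -> k) u : (1 < p)%N ->
  (addS p s a)`_(p ^ u) = if (u <= s)%N then a u else 0.
Proof.
move=> p1; rewrite coefS -sum_ind; apply: eq_bigr => t _; rewrite eqn_exp2l // eq_sym.
by [].
Qed.

Lemma coefS_big (k : fieldType) p s (a : nat -> k) j : (1 < p)%N -> (p ^ s < j)%N ->
  (addS p s a)`_j = 0.
Proof.
move=> p1 hj; rewrite coefS big1 // => t _.
have ht : (t <= s)%N by rewrite -ltnS.
have -> : (j == p ^ t)%N = false.
  by apply/negbTE; rewrite neq_ltn; apply/orP; right; apply: leq_ltn_trans hj; rewrite leq_exp2l.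
by rewrite mulr0.
Qed.

Lemma coef_f_succ (k : fieldType) p s (a : nat -> k) c j :
  ('X * addS p s a + c *: 'X)`_j.+1 = (addS p s a)`_j + c * (j == 0)%N%:R.
Proof. by rewrite coefD coefXM coefZ coefX. Qed.

Lemma frob_iter (k : fieldType) p (x : k) a u : x ^+ (p ^ a) = x -> x ^+ (p ^ (u * a)) = x.
Proof.
move=> h; elim: u => [|u IH]; first by rewrite mul0n expn0 expr1.
by rewrite mulSn expnD exprM h IH.
Qed.

Lemma frob_sub (k : fieldType) p (x : k) a b : p \in [pchar k] ->
  x ^+ (p ^ a) = x -> x ^+ (p ^ (a + b)) = x -> x ^+ (p ^ b) = x.
Proof.
move=> hp ha hab; apply: (@frob_inj _ p a) => //.
by rewrite -exprM -expnD addnC hab ha.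
Qed.

Lemma frob_gcd (k : fieldType) p (x : k) a b : p \in [pchar k] ->
  x ^+ (p ^ a) = x -> x ^+ (p ^ b) = x -> x ^+ (p ^ gcdn a b) = x.
Proof.
move=> hp ha hb; case: (posnP a) => [->|a0]; first by rewrite gcd0n.
case: (egcdnP b a0) => km kn he _.
apply: (@frob_sub _ p x (kn * b)) => //; first exact: frob_iter.
by rewrite -he frob_iter.
Qed.

Lemma natr_frob (k : fieldType) p (l : nat) : p \in [pchar k] -> (l%:R : k) ^+ p = l%:R.
Proof.
move=> hp; elim: l => [|l IH]; first by rewrite expr0n; case: p hp => // /pcharf_prime.
by rewrite -[p]expn1 mulrSr frobD // expn1 IH expr1n.
Qed.

Lemma Fp_elem (k : fieldType) p (x : k) : p \in [pchar k] -> x ^+ p = x ->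
  exists2 l, (l < p)%N & x = l%:R.
Proof.
move=> hp hx; have p1 := pgt1 hp.
set rs := [seq (l%:R : k) | l <- iota 0 p].
have hu : uniq rs.
  rewrite map_inj_in_uniq ?iota_uniq // => l1 l2; rewrite !mem_iota !add0n => /andP[_ h1] /andP[_ h2] he.
  wlog le12 : l1 l2 h1 h2 he / (l1 <= l2)%N.
    by move=> W; case: (leqP l1 l2) => h; [|apply/esym]; apply: W => //; apply: ltnW.
  apply/eqP; rewrite eqn_leq le12 /= -subn_eq0.
  have : (p %| l2 - l1)%N by rewrite (dvdn_pcharf hp) natrB // he subrr.
  move=> hd; case: (posnP (l2 - l1)%N) => // h0; move: (dvdn_leq h0 hd).
  by rewrite leqNgt (leq_ltn_trans (leq_subr _ _) h2).
set q := 'X^p - 'X : {poly k}.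
have sq : size q = p.+1.
  by rewrite /q size_addl ?size_polyXn // size_opp size_polyX ltnS.
have q0 : q != 0 by rewrite -size_poly_eq0 sq.
have hr : all (root q) rs.
  apply/allP => z /mapP[l _ ->]; rewrite /root /q !hornerE natr_frob // subrr.
  by [].
have := poly_eq_prod q0 hr hu; rewrite size_map size_iota sq => /(_ erefl) hq.
have : root q x by rewrite /root /q !hornerE hx subrr.
rewrite hq rootZ ?lead_coef_eq0 // root_prod_XsubC => /mapP[l].
by rewrite mem_iota add0n => /andP[_ hl] ->; exists l.
Qed.


Lemma gam_lemma (F : fieldType) (u w x y : F) : u != 0 -> w != 0 ->
  u^-1 * x = w^-1 * y -> x = (u / w) * y.
Proof. by move=> u0 w0 h; rewrite -(mulVKf u0 x) h mulrA. Qed.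

Lemma sum_two (k : fieldType) n (G : nat -> k) i0 i1 (c0 c1 : nat) :
  (i0 < n)%N -> (i1 < n)%N -> i0 != i1 ->
  \sum_(j < n) (if nat_of_ord j == i1 then c1 else if nat_of_ord j == i0 then c0 else 0%N)%:R * G j
  = c0%:R * G i0 + c1%:R * G i1.
Proof.
move=> h0 h1 h01.
rewrite (bigD1 (Ordinal h1)) //= eqxx (bigD1 (Ordinal h0)) /=; last first.
  by apply: contra h01 => /eqP [->].
rewrite (negbTE h01) eqxx big1 ?addr0; first by rewrite addrC.
move=> j /andP[hj1 hj0].
have -> : (nat_of_ord j == i1) = false.
  by apply/negbTE; apply: contra hj1 => /eqP h; apply/eqP/val_inj.
have -> : (nat_of_ord j == i0) = false.
  by apply/negbTE; apply: contra hj0 => /eqP h; apply/eqP/val_inj.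
by rewrite mul0r.
Qed.

Lemma sum_nat_ord (k : fieldType) n (F : nat -> k) : (0 < n)%N ->
  \sum_(j < n) F j = F 0%N + \sum_(1 <= j < n) F j.
Proof. by move=> hn; rewrite -(big_mkord xpredT F) big_ltn. Qed.


Unset Implicit Arguments. Set Strict Implicit.

Theorem proposition4p2
  (k : closedFieldType) (p : nat) (hp : p \in [pchar k])
  (n : nat) (hn : (2 <= n)%N)
  (* V : the F_p-subspace of k (additive subgroup) of dimension v *)
  (V : seq k) (v : nat)
  (hVuniq : uniq V) (hV0 : 0 \in V)
  (hVadd : forall x y, x \in V -> y \in V -> x + y \in V)
  (hVsize : size V = (p ^ v)%N)
  (* f_i (i = 0..n-1 stands for i = 1..n), reduced representatives *)
  (f : nat -> {poly k}) (m : nat -> nat)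
  (hred : forall i, (i < n)%N -> reduced p (f i))
  (hdeg : forall i, (i < n)%N -> is_clsdeg p (f i) (m i))
  (hsize : forall i, (i < n)%N -> size (f i) = (m i).+1)
  (ha : forall i, (i < n)%N -> ~~ (p %| m i)%N)
  (hb : forall i j, (i <= j < n)%N -> (m i <= m j)%N)
  (hc : forall lam : nat -> nat, (forall i, (i < n)%N -> (lam i < p)%N) ->
        (exists2 i, (i < n)%N & lam i != 0%N) ->
        is_clsdeg p (\sum_(i < n) (lam i)%:R *: f i)
                    (\max_(i < n | lam i != 0%N) m i))
  (* translation invariance *)
  (htrans : forall i y, (i < n)%N -> y \in V ->
            in_wp p (f i \Po ('X + y%:P) - f i))
  (* the resulting shape f_i = X S_i(X) + c_i X *)
  (s : nat -> nat) (a : nat -> nat -> k) (c : nat -> k)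
  (hform : forall i, (i < n)%N -> f i = 'X * addS p (s i) (a i) + c i *: 'X)
  (hs1 : forall i, (i < n)%N -> (1 <= s i)%N)
  (hlead : forall i, (i < n)%N -> a i (s i) != 0)
  (hv : v = (2 * s n.-1)%N) :
  (forall i, (i < n)%N -> s i = s 0%N) /\
  (forall y : k, y \in V <-> root (Ad p (s 0%N) (a 0%N)) y) /\
  (exists d : nat, (d %| s 0%N)%N /\
     exists gamma : nat -> k,
       (forall i, (1 <= i < n)%N -> inFq p d (gamma i) /\ ~~ inFq p 1 (gamma i)) /\
       (forall j, (j <= s 0%N)%N -> ~~ (d %| j)%N -> a 0%N j = 0) /\
       (forall i, (1 <= i < n)%N -> addS p (s i) (a i) = gamma i *: addS p (s 0%N) (a 0%N)) /\
       (forall lam : nat -> nat, (forall i, (i < n)%N -> (lam i < p)%N) ->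
          (lam 0%N)%:R + \sum_(1 <= i < n) (lam i)%:R * gamma i = 0 ->
          forall i, (i < n)%N -> lam i = 0%N)) /\
  (2 <= s 0%N)%N.
Proof.
have p1 : (1 < p)%N := pgt1 hp.
have p0 : (0 < p)%N := ltnW p1.
have hn0 : (0 < n)%N by apply: leq_trans hn.
have hn1 : (n.-1 < n)%N by rewrite prednK.
set S := s n.-1.
have hroot : forall i y, (i < n)%N -> y \in V -> root (Ad p (s i) (a i)) y.
  move=> i y hi hy; apply: (@trans_root _ p (s i) (a i) (c i)) => //; first exact: hlead.
  by rewrite -hform //; apply: htrans.
have hm : forall i, (i < n)%N -> m i = (p ^ s i).+1.
  move=> i hi; apply/eqP; rewrite eqn_leq; apply/andP; split.
    have : (size (f i) <= (p ^ s i).+2)%N.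
      apply/leq_sizeP => j hj; rewrite hform //.
      case: j hj => // j hj; rewrite coef_f_succ coefS_big //.
      by case: j hj => // j _; rewrite mulr0 addr0.
    by rewrite hsize.
  have : (f i)`_(p ^ s i).+1 != 0.
    rewrite hform // coef_f_succ coefS_pow // leqnn.
    by rewrite eqn0Ngt expn_gt0 p0 mulr0 addr0; apply: hlead.
  rewrite -ltnS -(hsize i hi) ltnNge; apply: contra => h; rewrite nth_default //.
have hsle : forall i, (i < n)%N -> (s i <= S)%N.
  move=> i hi; have : (m i <= m n.-1)%N by apply: hb; rewrite hn1 andbT -ltnS prednK.
  by rewrite !hm // ltnS leq_exp2l.
have hsge : forall i, (i < n)%N -> (S <= s i)%N.
  move=> i hi.
  have hall : all (root (Ad p (s i) (a i))) V by apply/allP => y hy; apply: hroot.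
  have := max_poly_roots (Ad_neq0 hp (hs1 i hi) (hlead i hi)) hall hVuniq.
  by rewrite hVsize Ad_size // ?hs1 ?hlead // hv ltnS leq_exp2l // mul2n addnn leq_double.
have hsS : forall i, (i < n)%N -> s i = S.
  by move=> i hi; apply/eqP; rewrite eqn_leq hsle ?hsge.
have hS1 : (1 <= S)%N by rewrite -(hsS 0%N hn0); apply: hs1.
have hlS : forall i, (i < n)%N -> a i S != 0 by move=> i hi; rewrite -(hsS i hi); apply: hlead.
set P := \prod_(z <- V) ('X - z%:P).
have hAdP : forall i, (i < n)%N -> Ad p S (a i) = lead_coef (Ad p S (a i)) *: P.
  move=> i hi; apply: poly_eq_prod.
  - exact: (Ad_neq0 hp hS1 (hlS i hi)).
  - by apply/allP => y hy; rewrite -(hsS i hi); apply: hroot.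
  - exact: hVuniq.
  rewrite Ad_size // ?hlS //; congr _.+1; move: hVsize; rewrite hv mul2n -addnn => <-; by [].
have hlc0 : forall i, (i < n)%N -> lead_coef (Ad p S (a i)) * P`_1 = 1.
  by move=> i hi; rewrite -coefZ -hAdP // Ad_coef1 // hlS.
have hAdE : forall i, (i < n)%N -> Ad p S (a i) = Ad p S (a 0%N).
  move=> i hi; rewrite (hAdP i hi) (hAdP 0%N hn0); congr (_ *: _).
  have hP1 : P`_1 != 0.
    by apply/eqP => h; have := hlc0 i hi; rewrite h mulr0 => /eqP; rewrite eq_sym oner_eq0.
  by apply: (mulIf hP1); rewrite !hlc0.
have hs0 : s 0%N = S by apply: hsS.
set gamma := fun i => a i S / a 0%N S.
have hrel : forall i j, (i < n)%N -> (j <= S)%N ->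
    (a i S)^-1 * a i j ^+ (p ^ S) = (a 0%N S)^-1 * a 0%N j ^+ (p ^ S).
  move=> i j hi hj; case: (posnP j) => [->|hj0]; last first.
    have hjj : (1 <= j <= S)%N by rewrite hj0 hj.
    by rewrite -(Ad_coef_hi (s:=S) (a i) hp hjj) -(Ad_coef_hi (s:=S) (a 0%N) hp hjj) hAdE.
  case: (boolP (p %| 2)%N) => h2.
    have hz : forall i, (i < n)%N -> a i 0%N = 0.
      move=> i' hi'; have := hred i' hi' 2 h2; rewrite hform // coef_f_succ.
      have := coefS_pow (s i') (a i') 0 p1; rewrite expn0 leq0n => ->; by rewrite mulr0 addr0.
    by rewrite !hz // expr0n expn_eq0 eqn0Ngt p0 /= !mulr0.
  have h20 : (2%:R : k) != 0 by rewrite -(dvdn_pcharf hp).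
  have := Ad_coef_mid S (a i) hp; rewrite hAdE // Ad_coef_mid // => /esym.
  rewrite -!mulr2n !mulrnAr => h; apply: (mulfI h20).
  by rewrite !mulr_natl h.
have hcoef : forall i j, (i < n)%N -> (j <= S)%N -> a i j = gamma i * a 0%N j.
  move=> i j hi hj.
  have hx : forall j', (j' <= S)%N -> a i j' ^+ (p ^ S) = gamma i * a 0%N j' ^+ (p ^ S).
    by move=> j' hj'; apply: gam_lemma; rewrite ?hlS // hrel.
  have hgS : gamma i ^+ (p ^ S) = gamma i.
    rewrite /gamma exprMn exprVn hx // -mulrA divff ?mulr1 //.
    by rewrite expf_neq0 // hlS.
  apply: (@frob_inj _ p S) => //; rewrite hx // exprMn hgS //.
have hg0 : gamma 0%N = 1 by rewrite /gamma divff // hlS.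
have hgam0 : forall i, (i < n)%N -> gamma i != 0.
  by move=> i hi; rewrite /gamma mulf_neq0 ?invr_eq0 ?hlS.
have haddS : forall i, (i < n)%N -> addS p (s i) (a i) = gamma i *: addS p (s 0%N) (a 0%N).
  move=> i hi; rewrite hsS // hs0 /addS scaler_sumr; apply: eq_bigr => j _.
  by rewrite scalerA -hcoef // -ltnS.
have hgj : forall i j, (i < n)%N -> (1 <= j <= S)%N -> a 0%N j != 0 -> gamma i ^+ (p ^ j) = gamma i.
  move=> i j hi hj ha0.
  have hjS : (j <= S)%N by case/andP: hj.
  have := Ad_coef_lo (s:=S) (a i) hp hj; rewrite hAdE // (Ad_coef_lo (s:=S) (a 0%N) hp hj).
  move=> /esym /gam_lemma; rewrite !hlS // => /(_ isT isT).
  rewrite (hcoef i j) // -[a i S / a 0%N S]/(gamma i) exprMn.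
  move=> /(mulIf (expf_neq0 _ ha0)) h.
  apply: (@frob_sub _ p _ (S - j)) => //.
  rewrite subnK //.
  have hx : a i S ^+ (p ^ S) = gamma i * a 0%N S ^+ (p ^ S).
    by apply: gam_lemma; rewrite ?hlS // hrel.
  by move: hx; rewrite {1}(hcoef i S) // exprMn => /(mulIf (expf_neq0 _ (hlS 0%N hn0))).
set d := gcdn S (\big[gcdn/0%N]_(j < S.+1 | a 0%N j != 0) (j : nat)).
have hdS : (d %| S)%N by apply: dvdn_gcdl.
have hd0 : forall j, (j <= S)%N -> ~~ (d %| j)%N -> a 0%N j = 0.
  move=> j hj hdj; apply/eqP; apply: contraNT hdj => ha0.
  apply: dvdn_trans (dvdn_gcdr _ _) _.
  by apply: (biggcdn_inf (Ordinal (hj : (j < S.+1)%N))) => //=.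
have hgd : forall i, (i < n)%N -> gamma i ^+ (p ^ d) = gamma i.
  move=> i hi; apply: frob_gcd => //.
    have hx : a i S ^+ (p ^ S) = gamma i * a 0%N S ^+ (p ^ S).
      by apply: gam_lemma; rewrite ?hlS // hrel.
    by move: hx; rewrite {1}(hcoef i S) // exprMn => /(mulIf (expf_neq0 _ (hlS 0%N hn0))).
  elim/big_ind: _ => //.
    by move=> x y hx hy; apply: frob_gcd.
  move=> j ha0; case: (posnP j) => [->|hj0]; first by rewrite expn0 expr1.
  by apply: hgj => //; rewrite hj0 -ltnS ltn_ord.
have hind : forall lam : nat -> nat, (forall i, (i < n)%N -> (lam i < p)%N) ->
    \sum_(i < n) (lam i)%:R * gamma i = 0 -> forall i, (i < n)%N -> lam i = 0%N.
  move=> lam hlam hsum i hi; apply/eqP; apply/negPn/negP => hne.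
  have [_ /(_ 0) hle] := hc lam hlam (ex_intro2 _ _ i hi hne).
  have hg : \sum_(i < n) (lam i)%:R *: f i = (\sum_(i < n) (lam i)%:R * c i) *: 'X.
    rewrite (eq_bigr (fun i : 'I_n => 'X * (((lam i)%:R * gamma i) *: addS p (s 0%N) (a 0%N))
                                   + ((lam i)%:R * c i) *: 'X)); last first.
      move=> j _; rewrite hform // haddS // scalerDr scalerAr !scalerA //.
    by rewrite big_split /= -mulr_sumr -scaler_suml hsum scale0r mulr0 add0r -scaler_suml.
  move: hle; rewrite hg /wp expr0n eqn0Ngt p0 /= subr0 addr0.
  have : (\max_(i < n | lam i != 0%N) m i >= m i)%N.
    exact: (leq_bigmax_cond (Ordinal hi) (P := fun i : 'I_n => lam i != 0%N) (F := fun i : 'I_n => m i)).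
  move=> h1 h2; have h3 := leq_trans h1 h2.
  have hsz : (size ((\sum_(i < n) (lam i)%:R * c i) *: 'X : {poly k}) <= 2)%N.
    by rewrite (leq_trans (size_scale_leq _ _)) // size_polyX.
  move: h3 hsz; rewrite hm //; set z := size _ => h3 hsz.
  have h4 : (z.-1 <= 1)%N by case: z h3 hsz => [|[|[|]]].
  by move: (leq_trans h3 h4); rewrite ltnS leqn0 expn_eq0 eqn0Ngt p0.
have hnFp : forall i, (0 < i < n)%N -> ~~ inFq p 1 (gamma i).
  move=> i /andP[hi1 hi]; rewrite /inFq expn1; apply/negP => /eqP hx.
  have [l hl hgl] := Fp_elem hp hx.
  pose lam := fun j : nat => if j == i then 1%N else if j == 0%N then ((p - l) %% p)%N else 0%N.
  have hlamb : forall j, (j < n)%N -> (lam j < p)%N.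
    move=> j _; rewrite /lam; case: ifP => _ //; case: ifP => _ //; exact: ltn_pmod.
  have hs : \sum_(j < n) (lam j)%:R * gamma j = 0.
    rewrite (sum_two gamma ((p - l) %% p) 1 hn0 hi); last by rewrite eq_sym -lt0n.
    rewrite hg0 mulr1 mul1r (hgl : gamma i = _) (GRing.natr_mod_pchar hp) -natrD subnK ?(GRing.pcharf0 hp) //.
    exact: ltnW.
  by have := hind lam hlamb hs i hi; rewrite /lam eqxx.
split.
  by move=> i hi; rewrite !hsS.
split.
  move=> y; split; first by move=> hy; apply: hroot.
  rewrite hs0 (hAdP 0%N hn0) rootZ ?lead_coef_eq0 ?(Ad_neq0 hp hS1 (hlS 0%N hn0)) //.
  by rewrite root_prod_XsubC.
split.
  exists d; split; first by rewrite hs0.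
  exists gamma; split.
    move=> i hi; split; last exact: hnFp.
    by rewrite /inFq hgd ?eqxx //; case/andP: hi.
  split; first by move=> j; rewrite hs0; exact: hd0.
  split; first by move=> i /andP[_ hi]; exact: haddS.
  move=> lam hlam hsum; apply: hind => //.
  by rewrite (sum_nat_ord (fun i => (lam i)%:R * gamma i)) // hg0 mulr1.
rewrite hs0 ltnNge; apply/negP => hS.
have hS' : S = 1%N by apply/eqP; rewrite eqn_leq hS hS1.
have hd1 : d = 1%N by apply/eqP; rewrite -dvdn1 -hS'.
have := hnFp 1%N; rewrite hn /= => /(_ isT).
have hg1 := hgd 1%N hn; rewrite hd1 in hg1.
by rewrite /inFq hg1 eqxx.
Qed.
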